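(* Let $\{x_i\}_{i\in\mathcal N_+}$ and $\{x_j\}_{j\in\mathcal N_-}$ be two finite nonempty families of vectors in $\mathbb R^s$ (indexed by disjoint index sets $\mathcal N_+$, $\mathcal N_-$), and define the centroids $x_p^c=\frac{1}{|\mathcal N_+|}\sum_{i\in\mathcal N_+}x_i$ and $x_n^c=\frac{1}{|\mathcal N_-|}\sum_{j\in\mathcal N_-}x_j$, the class-imbalance ratio $r_c=\frac{|\mathcal N_+|}{|\mathcal N_-|}$, and the scale-class-imbalance ratio $$r_{sc}=r_c\sqrt{\frac{\|x_p^c\|^2+1}{\|x_n^c\|^2+1}}.$$ Assume the mean-zero normalization $\sum_{i\in\mathcal N_+}x_i+\sum_{j\in\mathcal N_-}x_j=0$, and that $x_p^c\neq 0$ and $x_n^c\neq 0$. Then: if $r_{sc}=1$, we have $r_c=1$; and if $r_{sc}\neq 1$, we have $|r_{sc}-1|<|r_c-1|$.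
   Context: $\|\cdot\|$ denotes the Euclidean norm on $\mathbb R^s$ and $|\cdot|$ the cardinality of a finite set. *)

(* Defs.v *)
(* vectors in R^s are row vectors 'rV[R]_s over a realType R. *)
From HB Require Import structures.
From mathcomp Require Import all_boot all_order all_algebra.
From mathcomp Require Import reals.
Set Implicit Arguments. Unset Strict Implicit. Unset Printing Implicit Defensive.
Import Order.TTheory GRing.Theory Num.Theory.
Local Open Scope ring_scope.

Definition enorm (R : realType) (s : nat) (v : 'rV[R]_s) : R :=
  Num.sqrt (\sum_(k < s) v 0 k ^+ 2).

Definition centroid (R : realType) (s : nat) (T : finType) (x : T -> 'rV[R]_s)
  : 'rV[R]_s := (#|T|%:R)^-1 *: \sum_(i : T) x i.

Definition r_c (R : realType) (P N : finType) : R := #|P|%:R / #|N|%:R.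

Definition r_sc (R : realType) (s : nat) (P N : finType)
  (xp : P -> 'rV[R]_s) (xn : N -> 'rV[R]_s) : R :=
  r_c R P N * Num.sqrt ((enorm (centroid xp) ^+ 2 + 1) / (enorm (centroid xn) ^+ 2 + 1)).

(* Main.v *)
Require Import Defs.
From HB Require Import structures.
From mathcomp Require Import all_boot all_order all_algebra.
From mathcomp Require Import reals.
From mathcomp Require Import ring lra.
Import Order.TTheory GRing.Theory Num.Theory.
Local Open Scope ring_scope.
Set Implicit Arguments. Unset Strict Implicit.

Definition qn (R : realType) (s : nat) (v : 'rV[R]_s) : R := \sum_(k < s) v 0 k ^+ 2.

Lemma qn_ge0 (R : realType) s (v : 'rV[R]_s) : 0 <= qn v.
Proof. by apply: sumr_ge0 => k _; rewrite sqr_ge0. Qed.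

Lemma enorm2 (R : realType) s (v : 'rV[R]_s) : enorm v ^+ 2 = qn v.
Proof. by rewrite /enorm sqr_sqrtr // qn_ge0. Qed.

Lemma qnZ (R : realType) s (c : R) (v : 'rV[R]_s) : qn (c *: v) = c ^+ 2 * qn v.
Proof. rewrite /qn mulr_sumr; apply: eq_bigr => k _; by rewrite mxE exprMn. Qed.

Lemma qn_gt0 (R : realType) s (v : 'rV[R]_s) : v != 0 -> 0 < qn v.
Proof.
move=> nz; rewrite lt_def qn_ge0 andbT; apply: contra nz => /eqP H.
apply/eqP/rowP => k; rewrite mxE.
have := (psumr_eq0P (fun i _ => sqr_ge0 (v 0 i)) H (i:=k) isT).
by move/eqP; rewrite sqrf_eq0 => /eqP.
Qed.

Lemma key (R : realType) (t r a : R) : 0 <= t -> 0 < r -> 0 < a ->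
  t ^+ 2 * (a + 1) = a + r ^+ 2 ->
  (t = 1 -> r = 1) /\ (t != 1 -> `|t - 1| < `|r - 1|).
Proof.
move=> t0 r0 a0 E; split.
  move=> t1; subst t; have : r ^+ 2 = 1 by lra.
  by move/eqP; rewrite sqrf_eq1 => /orP [/eqP //| /eqP r1]; lra.
move=> tn1.
have [r1|r1] : r < 1 \/ 1 <= r by case: ltP; [left|right].
  have r21 : r ^+ 2 < 1 by nra.
  have h1 : (t ^+ 2 - 1) * (a + 1) < 0 by nra.
  have h2 : t ^+ 2 < 1 by rewrite -subr_lt0 -(pmulr_llt0 _ (_ : 0 < a + 1)); lra.
  have t1 : t < 1 by nra.
  have h3 : (t ^+ 2 - r ^+ 2) * (a + 1) > 0 by nra.
  have h4 : r ^+ 2 < t ^+ 2 by rewrite -subr_gt0 -(pmulr_lgt0 _ (_ : 0 < a + 1)); lra.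
  have rt : r < t by nra.
  rewrite !ler0_norm; lra.
have [r2|r2] : r = 1 \/ 1 < r by case: (ltP 1 r) => h; [right|left; lra].
  subst r; have : t ^+ 2 = 1 by nra.
  by move/eqP; rewrite sqrf_eq1 => /orP [//| /eqP r1']; [rewrite (negbTE tn1)| lra].
have r21 : 1 < r ^+ 2 by nra.
have h1 : (t ^+ 2 - 1) * (a + 1) > 0 by nra.
have h2 : 1 < t ^+ 2 by rewrite -subr_gt0 -(pmulr_lgt0 _ (_ : 0 < a + 1)); lra.
have t1 : 1 < t by nra.
have h3 : (t ^+ 2 - r ^+ 2) * (a + 1) < 0 by nra.
have h4 : t ^+ 2 < r ^+ 2 by rewrite -subr_lt0 -(pmulr_llt0 _ (_ : 0 < a + 1)); lra.
have rt : t < r by nra.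
rewrite !ger0_norm; lra.
Qed.

Theorem theorem1 (R : realType) (s : nat) (P N : finType)
  (xp : P -> 'rV[R]_s) (xn : N -> 'rV[R]_s) :
  (0 < #|P|)%N -> (0 < #|N|)%N ->
  \sum_(i : P) xp i + \sum_(j : N) xn j = 0 ->
  centroid xp != 0 -> centroid xn != 0 ->
  (r_sc xp xn = 1 -> r_c R P N = 1) /\
  (r_sc xp xn != 1 -> `|r_sc xp xn - 1| < `|r_c R P N - 1|).
Proof.
move=> hp hn hs _ hcn.
set p : R := #|P|%:R; set n : R := #|N|%:R.
have p0 : 0 < p by rewrite ltr0n.
have n0 : 0 < n by rewrite ltr0n.
have Sp : \sum_(i : P) xp i = - \sum_(j : N) xn j by apply/eqP; rewrite -addr_eq0 hs.
have cp : centroid xp = - (n / p) *: centroid xn.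
  rewrite /centroid Sp scalerA scalerN -scaleNr; congr (_ *: _).
  by rewrite -/p -/n; field; rewrite !pnatr_eq0 -!lt0n hp hn.
set a := qn (centroid xn).
have a0 : 0 < a by exact: qn_gt0.
apply: (@key R (r_sc xp xn) (r_c R P N) a).
- by rewrite /r_sc mulr_ge0 ?sqrtr_ge0 // /r_c divr_ge0 // ler0n.
- by rewrite /r_c divr_gt0.
- by [].
rewrite /r_sc exprMn sqr_sqrtr; last first.
  by rewrite divr_ge0 // ?enorm2 addr_ge0 ?qn_ge0.
rewrite !enorm2 cp qnZ -/a /r_c -/p -/n.
have a1 : a + 1 != 0 by apply: lt0r_neq0; lra.
by field; rewrite a1 !pnatr_eq0 -!lt0n hp hn.
Qed.
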